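(* Under the hypotheses and notation of the following setup: $d>0$, $\ell$ a certified lower bound with certificate matrix $\Lambda$, $f(d,\ell)=1$, $i\in\{1,\dots,m\}$, $L_i:=a_i^\top y(d,\ell)-\gamma_i(d,\ell)$, $\hat\lambda_i:=\gamma_i(d,\ell)Dt(d,\ell)-DA^\top B(d)^{-1}a_i$, $\tilde\lambda_i:=\Lambda\hat\lambda_i^-+\hat\lambda_i^+$: if $L_i>u_i$, then $\bar\lambda_i:=\tilde\lambda_i+e_i$ satisfies $A\bar\lambda_i=0$, $\bar\lambda_i\ge0$, $u^\top\bar\lambda_i<0$ (so it is a type-L certificate of infeasibility of $A^\top x\le u$).
   Context: Standing assumption: $A=[a_1|\cdots|a_m]\in\mathbb{R}^{n\times m}$ has columns of unit Euclidean norm and $\{A\lambda:\lambda\ge0\}=\mathbb{R}^n$; $u\in\mathbb{R}^m$. $D=\mathrm{diag}(d)$; $r(\ell)=\tfrac12(u+\ell)$, $v(\ell)=\tfrac12(u-\ell)$, $B(d)=ADA^\top$, $y(d,\ell)=B(d)^{-1}ADr(\ell)$, $t(d,\ell)=A^\top y(d,\ell)-r(\ell)$, $f(d,\ell)=v(\ell)^\top Dv(\ell)-t(d,\ell)^\top Dt(d,\ell)$, $\gamma_i(d,\ell)=\sqrt{f(d,\ell)a_i^\top B(d)^{-1}a_i}$ when $f(d,\ell)>0$. $\ell$ is a certified lower bound with certificate matrix $\Lambda\in\mathbb{R}^{m\times m}$ if $A\Lambda=-A$, $\Lambda\ge0$, $-\Lambda^\top u\ge\ell$. $w^\pm$ denote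 positive/negative parts; $e_i$ is the $i$-th unit vector. *)

(* Defs.v *)
(* matrices over an arbitrary real closed field R
   (real closed so that Num.sqrt is available for gamma_i). *)
From HB Require Import structures.
From mathcomp Require Import all_boot all_order all_algebra.
Set Implicit Arguments. Unset Strict Implicit. Unset Printing Implicit Defensive.
Import Order.TTheory GRing.Theory Num.Theory.
Local Open Scope ring_scope.

Section Defs.
Variable R : rcfType.
Variables n m : nat.
Implicit Types (A : 'M[R]_(n, m)) (u d l : 'cV[R]_m).

Definition Dm d : 'M[R]_m := diag_mx d^T.
Definition rv u l : 'cV[R]_m := (2%:R)^-1 *: (u + l).
Definition vv u l : 'cV[R]_m := (2%:R)^-1 *: (u - l).
Definition Bm A d : 'M[R]_n := A *m Dm d *m A^T.
Definition yv A u d l : 'cV[R]_n := invmx (Bm A d) *m (A *m (Dm d *m rv u l)).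
Definition tv A u d l : 'cV[R]_m := A^T *m yv A u d l - rv u l.
Definition fv A u d l : R :=
  (((vv u l)^T *m Dm d *m vv u l) - ((tv A u d l)^T *m Dm d *m tv A u d l)) ord0 ord0.
(* gamma_i(d,l) = sqrt(f(d,l) a_i^T B(d)^{-1} a_i)   (meaningful when f > 0) *)
Definition gammav A u d l (i : 'I_m) : R :=
  Num.sqrt (fv A u d l * ((col i A)^T *m invmx (Bm A d) *m col i A) ord0 ord0).
Definition pospart (k : nat) (w : 'cV[R]_k) : 'cV[R]_k := map_mx (fun x => Num.max x 0) w.
Definition negpart (k : nat) (w : 'cV[R]_k) : 'cV[R]_k := map_mx (fun x => Num.max (- x) 0) w.
Definition evec (i : 'I_m) : 'cV[R]_m := delta_mx i ord0.
End Defs.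
Arguments evec {R m} i.

(* Main.v *)
Require Import Defs.
From HB Require Import structures.
From mathcomp Require Import all_boot all_order all_algebra.
From mathcomp Require Import ring lra.
Import Order.TTheory GRing.Theory Num.Theory.
Local Open Scope ring_scope.

Section Helpers.
Variable R : rcfType.

Lemma bilE k (p e q : 'cV[R]_k) :
  (p^T *m Dm e *m q) ord0 ord0 = \sum_j p j ord0 * e j ord0 * q j ord0.
Proof. rewrite /Dm mul_mx_diag !mxE; apply: eq_bigr => j _; rewrite !mxE (_ : 0 = ord0) //; exact: val_inj. Qed.

Lemma dotE k (p q : 'cV[R]_k) :
  (p^T *m q) ord0 ord0 = \sum_j p j ord0 * q j ord0.
Proof. rewrite !mxE; apply: eq_bigr => j _; by rewrite !mxE. Qed.

Lemma DmT k (e : 'cV[R]_k) : (Dm e)^T = Dm e.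
Proof. by rewrite /Dm tr_diag_mx. Qed.

Lemma DmE k (e q : 'cV[R]_k) j : (Dm e *m q) j ord0 = e j ord0 * q j ord0.
Proof. by rewrite /Dm mul_diag_mx !mxE. Qed.

Lemma key (dj s uj lj zj : R) : 0 < dj -> 0 < s ->
 - lj * Num.max (-(dj*zj)) 0 + uj * Num.max (dj*zj) 0 <=
   (2^-1*(uj+lj)) * dj * zj +
   (s * ((2^-1*(uj-lj)) * dj * (2^-1*(uj-lj))) + zj*dj*zj / s) / 2.
Proof.
move=> hd hs.
set q := zj / s.
have ez : zj = s * q by rewrite /q mulrC divfK // gt_eqF.
have -> : zj*dj*zj / s = s*dj*q*q by rewrite ez; field; rewrite gt_eqF.
rewrite ez.
set v := 2^-1*(uj-lj).
have hsd : 0 <= s * dj by rewrite mulr_ge0 // ltW.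
case: (lerP 0 (dj * (s*q))) => hx.
- rewrite (max_r (_ : -(dj*(s*q)) <= 0)); last by rewrite oppr_le0.
  have := mulr_ge0 hsd (sqr_ge0 (v - q)).
  rewrite /v; nra.
- rewrite (max_l (_ : 0 <= -(dj*(s*q)))); last by rewrite oppr_ge0 ltW.
  have := mulr_ge0 hsd (sqr_ge0 (v + q)).
  rewrite /v; nra.
Qed.


Lemma sum_sq0 k (e p : 'cV[R]_k) : (forall j, 0 < e j ord0) ->
  \sum_j p j ord0 * e j ord0 * p j ord0 = 0 -> p = 0.
Proof.
move=> he h0; apply/matrixP => j o; rewrite (ord1 o) mxE.
have hge : forall i, predT i -> 0 <= p i ord0 * e i ord0 * p i ord0.
  by move=> i _; rewrite mulrC mulrA -expr2 mulr_ge0 ?sqr_ge0 ?ltW.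
have := psumr_eq0P hge h0 (i := j) isT.
rewrite mulrC mulrA -expr2 => /eqP; rewrite mulf_eq0 sqrf_eq0 (gt_eqF (he j)) orbF.
by move/eqP.
Qed.


Lemma unitB n m (A : 'M[R]_(n,m)) (d : 'cV_m) : (forall j, 0 < d j ord0) ->
  (forall x : 'cV[R]_n, exists lam : 'cV[R]_m, (forall j, 0 <= lam j ord0) /\ A *m lam = x) ->
  Bm A d \in unitmx.
Proof.
move=> hd hspan; rewrite unitmxE unitfE; apply/negP => /det0P [v vn0 vB].
set p := A^T *m v^T.
have pT : p^T = v *m A by rewrite /p trmx_mul !trmxK.
have hp : p^T *m Dm d *m p = 0.
  rewrite pT /p.
  have -> : v *m A *m Dm d *m (A^T *m v^T) = v *m Bm A d *m v^T by rewrite /Bm !mulmxA.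
  by rewrite vB mul0mx.
have p0 : p = 0.
  apply: (@sum_sq0 _ d p hd); by rewrite -bilE hp mxE.
have hvA : v *m A = 0 by rewrite -pT p0 trmx0.
have [lam [_ hl]] := hspan v^T.
have h : v *m v^T = 0 by rewrite -hl mulmxA hvA mul0mx.
have h2 : \sum_j v^T j ord0 * v^T j ord0 = 0.
  by rewrite -dotE trmxK h mxE.
have v0 : v^T = 0.
  apply: (@sum_sq0 _ (const_mx 1) v^T); first by move=> j; rewrite mxE ltr01.
  by rewrite -[RHS]h2; apply: eq_bigr => j _; rewrite !mxE mulr1.
by move/eqP: vn0; apply; rewrite -[v]trmxK v0 trmx0.
Qed.

















Lemma addE k1 k2 (M N : 'M[R]_(k1,k2)) a b : (M + N) a b = M a b + N a b.
Proof. by rewrite mxE. Qed.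
Lemma subE k1 k2 (M N : 'M[R]_(k1,k2)) a b : (M - N) a b = M a b - N a b.
Proof. by rewrite !mxE. Qed.
Lemma scaleE k1 k2 (c : R) (M : 'M[R]_(k1,k2)) a b : (c *: M) a b = c * M a b.
Proof. by rewrite mxE. Qed.
Lemma posE k (w : 'cV[R]_k) j o : pospart w j o = Num.max (w j o) 0.
Proof. by rewrite mxE. Qed.
Lemma negE k (w : 'cV[R]_k) j o : negpart w j o = Num.max (- w j o) 0.
Proof. by rewrite mxE. Qed.
Lemma posneg k (w : 'cV[R]_k) : pospart w - negpart w = w.
Proof.
apply/matrixP => j o; rewrite subE posE negE; case: (lerP 0 (w j o)) => h.
- by rewrite (max_r (_ : - w j o <= 0)) ?subr0 // oppr_le0.
- by rewrite (max_l (_ : 0 <= - w j o)) ?sub0r ?opprK // oppr_ge0 ltW.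
Qed.
Lemma zeroE k1 k2 a b : (0 : 'M[R]_(k1,k2)) a b = 0.
Proof. by rewrite mxE. Qed.
Lemma oppE k1 k2 (M : 'M[R]_(k1,k2)) a b : (- M) a b = - M a b.
Proof. by rewrite mxE. Qed.
Lemma trE (M : 'M[R]_1) : M^T ord0 ord0 = M ord0 ord0.
Proof. by rewrite mxE. Qed.

End Helpers.















Theorem corollary3 (R : rcfType) (n m : nat) (A : 'M[R]_(n, m)) (u : 'cV[R]_m)
  (* columns of A have unit Euclidean norm *)
  (hunit : forall j : 'I_m, \sum_(k < n) (A k j) ^+ 2 = 1)
  (* the conic hull of the columns of A is R^n *)
  (hspan : forall x : 'cV[R]_n,
      exists lam : 'cV[R]_m, (forall j, 0 <= lam j ord0) /\ A *m lam = x)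
  (d l : 'cV[R]_m) (hd : forall j, 0 < d j ord0)
  (Lam : 'M[R]_m)
  (* l is a certified lower bound with certificate matrix Lam *)
  (hcert1 : A *m Lam = - A)
  (hcert2 : forall j k, 0 <= Lam j k)
  (hcert3 : forall j, l j ord0 <= (- (Lam^T *m u)) j ord0)
  (hf : fv A u d l = 1)
  (i : 'I_m) :
  let Li := ((col i A)^T *m yv A u d l) ord0 ord0 - gammav A u d l i in
  let lamhat := gammav A u d l i *: (Dm d *m tv A u d l)
                - Dm d *m A^T *m invmx (Bm A d) *m col i A in
  let lamtil := Lam *m negpart lamhat + pospart lamhat in
  let lambar := lamtil + evec i in
  u i ord0 < Li ->
  [/\ A *m lambar = 0,
      (forall j, 0 <= lambar j ord0) &
      ((u^T *m lambar) ord0 ord0 < 0)].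

Proof.
move=> Li lamhat lamtil lambar hL.
set D := Dm d. set B := Bm A d. set Bi := invmx B. set a := col i A.
set r := rv u l. set y := yv A u d l. set t := tv A u d l. set g := gammav A u d l i.
have hBu : B \in unitmx := @unitB R n m A d hd hspan.
have hBB : B *m Bi = 1%:M by apply: mulmxV.
have hBiT : Bi^T = Bi by rewrite /Bi trmx_inv /B /Bm !trmx_mul trmxK DmT mulmxA.
have hy : y = Bi *m (A *m (D *m r)) by [].
have et : t = A^T *m y - r by [].
have hADt : A *m (D *m t) = 0.
  rewrite et mulmxBr mulmxBr !mulmxA.
  rewrite (_ : A *m D *m A^T = B) // hBB mul1mx; exact: subrr.
set c := A^T *m (Bi *m a).
set z := g *: t - c.
have ez : lamhat = D *m z.
  have e1 : D *m (A^T *m (Bi *m a)) = D *m A^T *m Bi *m a by rewrite !mulmxA.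
  by rewrite /z mulmxBr -scalemxAr /c e1.
have hAlh : A *m lamhat = - a.
  rewrite ez /z mulmxBr mulmxBr -!scalemxAr hADt scaler0 sub0r /c.
  have -> : A *m (D *m (A^T *m (Bi *m a))) = B *m Bi *m a by rewrite !mulmxA.
  by rewrite hBB mul1mx.
have hPN : pospart lamhat - negpart lamhat = lamhat by apply: posneg.
have hAe : A *m evec i = a by rewrite /evec /a colE.
have hN : forall k, 0 <= negpart lamhat k ord0 by move=> k; rewrite negE le_max lexx orbT.
have hP : forall k, 0 <= pospart lamhat k ord0 by move=> k; rewrite posE le_max lexx orbT.
split.
- rewrite /lambar /lamtil mulmxDr mulmxDr mulmxA hcert1 mulNmx hAe.
  have hh : A *m pospart lamhat - A *m negpart lamhat = - a by rewrite -mulmxBr hPN hAlh.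
  by rewrite (addrC (- _)) hh addNr.
- move=> j; rewrite /lambar /lamtil !addE.
  apply: addr_ge0; [apply: addr_ge0|].
  + by rewrite mxE; apply: sumr_ge0 => k _; rewrite mulr_ge0.
  + exact: hP.
  + by rewrite mxE ler0n.
have horth : forall q : 'cV[R]_n, t^T *m D *m (A^T *m q) = 0.
  move=> q; have -> : t^T *m D *m (A^T *m q) = (A *m (D *m t))^T *m q.
    by rewrite !trmx_mul DmT !mulmxA.
  by rewrite hADt trmx0 mul0mx.
set tau := (t^T *m D *m t) ord0 ord0.
set nu := ((vv u l)^T *m D *m vv u l) ord0 ord0.
set beta := (a^T *m Bi *m a) ord0 ord0.
set ay := (a^T *m y) ord0 ord0.
have hfv : nu - tau = 1 by rewrite -hf /fv subE.
have hg : g = Num.sqrt beta by rewrite /g /gammav hf mul1r.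
have htr : (r^T *m D *m t) ord0 ord0 = - tau.
  have h0 := horth y.
  have eAy : A^T *m y = t + r by rewrite et subrK.
  rewrite eAy mulmxDr in h0.
  have := congr1 (fun M : 'M[R]_1 => M ord0 ord0) h0; rewrite /= addE zeroE => h1.
  have h2 : (r^T *m D *m t) ord0 ord0 = (t^T *m D *m r) ord0 ord0.
    by rewrite !bilE; apply: eq_bigr => j _; ring.
  rewrite h2; rewrite /tau; lra.
have hc : (r^T *m D *m c) ord0 ord0 = ay.
  have -> : r^T *m D *m c = (A *m (D *m r))^T *m Bi *m a by rewrite /c !trmx_mul DmT !mulmxA.
  by rewrite /ay -[RHS]trE hy !trmx_mul trmxK hBiT.
have hrz : (r^T *m D *m z) ord0 ord0 = - (g * tau) - ay.
  by rewrite /z mulmxBr -scalemxAr subE scaleE htr hc mulrN.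
have hcc : (c^T *m D *m c) ord0 ord0 = beta.
  have -> : c^T *m D *m c = a^T *m Bi *m (B *m Bi) *m a.
    by rewrite /c /B /Bm !trmx_mul trmxK hBiT !mulmxA.
  by rewrite hBB mulmx1.
have htc : (t^T *m D *m c) ord0 ord0 = 0 by rewrite /c horth zeroE.
have hZ : (z^T *m D *m z) ord0 ord0 = g^+2 * tau + beta.
  rewrite -hcc /tau (@bilE _ _ z d z).
  have -> : \sum_j z j ord0 * d j ord0 * z j ord0 = g^+2 * (\sum_j t j ord0 * d j ord0 * t j ord0) - (g *+ 2) * (\sum_j t j ord0 * d j ord0 * c j ord0) + \sum_j c j ord0 * d j ord0 * c j ord0.
    rewrite !mulr_sumr -sumrB -big_split /=; apply: eq_bigr => j _; rewrite /z subE scaleE; ring.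
  by rewrite -(@bilE _ _ t d c) htc mulr0 subr0 !bilE.
have hbeta : 0 <= beta.
  rewrite -hcc bilE; apply: sumr_ge0 => j _.
  by rewrite mulrC mulrA -expr2 mulr_ge0 ?sqr_ge0 ?ltW.
have htau : 0 <= tau.
  rewrite /tau bilE; apply: sumr_ge0 => j _.
  by rewrite mulrC mulrA -expr2 mulr_ge0 ?sqr_ge0 ?ltW.
have hg2 : g^+2 = beta by rewrite hg sqr_sqrtr.
have hg0 : 0 <= g by rewrite hg sqrtr_ge0.
have hU : forall s, 0 < s -> (u^T *m lambar) ord0 ord0 <=
    u i ord0 + (- (g * tau) - ay) + (s * nu + (g^+2 * tau + beta) / s) / 2.
  move=> s hs.
  have e1 : (u^T *m lambar) ord0 ord0 = (u^T *m (Lam *m negpart lamhat)) ord0 ord0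
      + (u^T *m pospart lamhat) ord0 ord0 + u i ord0.
    rewrite /lambar /lamtil !mulmxDr !addE; congr (_ + _).
    by rewrite /evec -colE !mxE.
  have e2 : (u^T *m (Lam *m negpart lamhat)) ord0 ord0 <=
      \sum_j - l j ord0 * negpart lamhat j ord0.
    rewrite mulmxA -[u^T *m Lam]trmxK trmx_mul trmxK dotE.
    apply: ler_sum => j _; apply: ler_wpM2r; first exact: hN.
    by have := hcert3 j; rewrite oppE => h; lra.
  have e3 : (u^T *m pospart lamhat) ord0 ord0 = \sum_j u j ord0 * pospart lamhat j ord0.
    by rewrite dotE.
  have e4 : \sum_j (- l j ord0 * negpart lamhat j ord0 + u j ord0 * pospart lamhat j ord0)
     <= \sum_j (r j ord0 * d j ord0 * z j ord0 +
        (s * (vv u l j ord0 * d j ord0 * vv u l j ord0) + z j ord0 * d j ord0 * z j ord0 / s) / 2).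
    apply: ler_sum => j _.
    have hl : lamhat j ord0 = d j ord0 * z j ord0 by rewrite ez DmE.
    rewrite negE posE hl.
    have er : r j ord0 = 2^-1 * (u j ord0 + l j ord0) by rewrite scaleE addE.
    have ev : vv u l j ord0 = 2^-1 * (u j ord0 - l j ord0) by rewrite scaleE subE.
    rewrite er ev; apply: key; [exact: hd | exact: hs].
  have e5 : \sum_j (r j ord0 * d j ord0 * z j ord0 +
        (s * (vv u l j ord0 * d j ord0 * vv u l j ord0) + z j ord0 * d j ord0 * z j ord0 / s) / 2)
      = (r^T *m D *m z) ord0 ord0 + (s * nu + (z^T *m D *m z) ord0 ord0 / s) / 2.
    rewrite /nu !bilE big_split /= -mulr_suml big_split /= -mulr_sumr -mulr_suml //.
  rewrite e1 e3.
  apply: (@le_trans _ _ (u i ord0 + \sum_j (- l j ord0 * negpart lamhat j ord0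
                                         + u j ord0 * pospart lamhat j ord0))).
    rewrite big_split /=; lra.
  by rewrite -addrA lerD2l -hrz -hZ -e5.
have hL' : u i ord0 < ay - g := hL.
have hnu : nu = 1 + tau by lra.
case: (ltrP 0 g) => hgp.
- have := hU g hgp; rewrite -hg2 hnu.
  have -> : (g ^+ 2 * tau + g ^+ 2) / g = g * (1 + tau) by field; rewrite gt_eqF.
  move=> h; nra.
- have g0 : g = 0 by apply/le_anti; rewrite hgp hg0.
  have b0 : beta = 0 by rewrite -hg2 g0 expr2 mulr0.
  set eps := ay - u i ord0.
  have heps : 0 < eps by rewrite /eps; lra.
  have hnu0 : 0 < nu by lra.
  have := hU (eps / nu) (divr_gt0 heps hnu0).
  rewrite g0 b0 expr2 !mul0r !add0r mul0r (divfK (negbT (gt_eqF hnu0))) => h.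
  rewrite /eps in h; lra.
Qed.
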